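(* Let $A$ be an abelian variety of dimension $g\ge1$ over a finite field $\mathbb F_q$. Suppose that $P_A(T)$ has cycle types $(2g)$ and $(2,1,1,\ldots,1)$, and that $Q_A(T)$ has cycle type $\sigma$ for every partition $\sigma$ of $g$. Then $\operatorname{Gal}(P_A(T))\cong W_{2g}$.
   Context: $P_A(T)\in\mathbb Z[T]$ is the unique polynomial of degree $2g$ such that the isogeny $r-\pi_A$ has degree $P_A(r)$ for all $r\in\mathbb Z$, where $\pi_A$ is the $q$-power Frobenius endomorphism of $A$; it satisfies $P_A(q/T)/(q/T)^g=P_A(T)/T^g$. $Q_A(T)\in\mathbb Z[T]$ is the unique polynomial with $P_A(T)=T^gQ_A(T+q/T)$. $W_{2g}$ is the group of permutations of $\{1,\ldots,2g\}$ that permute the set of pairs $\{\{1,2\},\ldots,\{2g-1,2g\}\}$. For $f\in\mathbb Z[T]$ of degree $n$, $\operatorname{Gal}(f)$ is the Galois group over $\mathbb Q$ of its splitting field; a partition $\sigma=(\sigma_1,\ldots,\sigma_k)$ of $n$ ($\sigma_1\ge\cdots\ge\sigma_k\ge1$, $\sum\sigma_i=n$) is a cycle type of $f$ if $f$ is separable and the image of $\operatorname{Gal}(f)$ in the symmetric group $\mathfrak S_n$ (via a numbering of the roots) contains a permutation whose disjoint cycle lengths are $\sigma_1,\ldots,\sigma_k$. *)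

(* Defs.v *)
From HB Require Import structures.
From mathcomp Require Import all_boot all_order all_algebra all_fingroup all_field.
From mathcomp Require Import boolp.
Set Implicit Arguments. Unset Strict Implicit. Unset Printing Implicit Defensive.
Import Order.TTheory GRing.Theory Num.Theory.
Local Open Scope ring_scope.

Definition polyC_of (f : {poly int}) : {poly algC} := map_poly intr f.

Definition root_numbering (f : {poly int}) (n : nat) (rs : n.-tuple algC) : Prop :=
  uniq rs /\
  polyC_of f = ((lead_coef f)%:~R : algC) *: \prod_(r <- rs) ('X - r%:P).

(* The image of Gal(f) (= Gal(Qbar/Q) acting on the roots) in S_n, via the
   numbering rs.  Every ring endomorphism of algC is a field automorphism
   fixing Q, and every automorphism of the splitting field extends. *)
Definition galperm (n : nat) (rs : n.-tuple algC) : {set 'S_n} :=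
  [set s : 'S_n | `[< exists u : {rmorphism algC -> algC},
                        forall i : 'I_n, u (tnth rs i) = tnth rs (s i) >]].

Definition cycle_type (n : nat) (s : 'S_n) : seq nat :=
  sort geq (map (fun X : {set 'I_n} => #|X|) (enum (porbits s))).

Definition is_partition (n : nat) (sigma : seq nat) : Prop :=
  [/\ sorted geq sigma, all (fun k => 0 < k)%N sigma & sumn sigma = n].

Definition has_cycle_type (f : {poly int}) (sigma : seq nat) : Prop :=
  exists rs : ((size f).-1).-tuple algC,
    root_numbering f rs /\ exists2 s, s \in galperm rs & cycle_type s = sigma.

(* W_{2g}: permutations of {0,...,2g-1} permuting the pairs {2i, 2i+1}
   (0-indexed version of {1,2},...,{2g-1,2g}). *)
Definition W (g : nat) : {set 'S_(g.*2)} :=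
  [set s : 'S_(g.*2) | [forall i, forall j,
      ((val i)./2 == (val j)./2) == ((val (s i))./2 == (val (s j))./2)]].

(* Main.v *)
Require Import Defs.
From HB Require Import structures.
From mathcomp Require Import all_boot all_order all_algebra all_fingroup all_field.
From mathcomp Require Import boolp.
From mathcomp Require Import ring lra zify.
Import Order.TTheory GRing.Theory Num.Theory.
Local Open Scope ring_scope.
Lemma count_enum_set (T : finType) (A : {set T}) (a : pred T) :
  count a (enum A) = #|[set x in A | a x]|.
Proof.
rewrite -size_filter cardE; apply/perm_size/uniq_perm.
- by apply/filter_uniq/enum_uniq.
- exact: enum_uniq.
- by move=> x; rewrite mem_filter !mem_enum !inE andbC.
Qed.

Lemma ct_perm {n} (s : 'S_n) :
  perm_eq (cycle_type s) (map (fun X : {set 'I_n} => #|X|) (enum (porbits s))).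
Proof. by rewrite /cycle_type perm_sort. Qed.

Lemma ct_count {n} (s : 'S_n) (a : pred nat) :
  count a (cycle_type s) = #|[set X in porbits s | a #|X|]|.
Proof.
rewrite (seq.permP (ct_perm s)) count_map.
by rewrite count_enum_set.
Qed.

Lemma partition_porbits {T : finType} (s : {perm T}) : partition (porbits s) [set: T].
Proof.
apply/and3P; split.
- apply/eqP/setP=> x; rewrite inE; apply/bigcupP; exists (porbit s x).
    by apply: imset_f. 
  exact: porbit_id.
- apply/trivIsetP=> A B /imsetP[a _ ->] /imsetP[b _ ->] neq.
  apply/pred0P=> y /=; apply/negbTE/negP=> /andP[ya yb].
  rewrite -eq_porbit_mem in ya; rewrite -eq_porbit_mem in yb.
  by move: neq; rewrite -(eqP ya) (eqP yb) eqxx.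
- apply/negP=> /imsetP[x _ /esym E].
  by move: (porbit_id s x); rewrite E inE.
Qed.

Lemma ct_sum {n} (s : 'S_n) : sumn (cycle_type s) = n.
Proof.
rewrite (perm_sumn (ct_perm s)).
rewrite sumnE big_map big_enum /=.
by rewrite -(card_partition (partition_porbits s)) cardsT card_ord.
Qed.

Lemma porbit_fix {T : finType} (s : {perm T}) x : s x = x -> porbit s x = [set x].
Proof.
move=> sx; apply/setP=> y; rewrite inE; apply/porbitP/eqP=> [[i ->]|->].
  by rewrite permX_fix.
by exists 0; rewrite expg0 perm1.
Qed.

Lemma porbit_card1 {T : finType} (s : {perm T}) x : #|porbit s x| = 1%N -> s x = x.
Proof.
move/eqP/cards1P=> [y Ey].
have hx := porbit_id s x; have hsx := mem_porbit s 1 x.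
rewrite Ey inE in hx; rewrite Ey inE expg1 in hsx.
by rewrite (eqP hsx) (eqP hx).
Qed.

Lemma porbit_s {T : finType} (s : {perm T}) x y : y \in porbit s x -> s y \in porbit s x.
Proof.
move=> /porbitP[i ->]; rewrite -permM -expgSr; exact: mem_porbit.
Qed.

Lemma ct_mem {n} (s : 'S_n) m : m \in cycle_type s -> exists x, #|porbit s x| = m.
Proof.
rewrite -has_pred1 has_count ct_count card_gt0 => /set0Pn[X].
rewrite inE => /andP[/imsetP[x _ ->] /eqP E]; by exists x.
Qed.

Lemma ct_full {n} (s : 'S_n) : cycle_type s = [:: n] -> exists x, forall y, y \in porbit s x.
Proof.
move=> E; have [x Hx] : exists x, #|porbit s x| = n by apply: ct_mem; rewrite E mem_head.
exists x => y.
have -> : porbit s x = [set: 'I_n].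
  by apply/eqP; rewrite eqEcard subsetT cardsT Hx /=; apply: eq_leq; exact: card_ord.
by rewrite inE.
Qed.

Lemma ct_transp {n} (s : 'S_n) : cycle_type s = 2%N :: nseq (n - 2) 1%N ->
  exists x, s x != x /\ s = tperm x (s x).
Proof.
move=> E; have [x Hx] : exists x, #|porbit s x| = 2%N by apply: ct_mem; rewrite E mem_head.
have Hc : #|[set X in porbits s | #|X| != 1%N]| = 1%N.
  by rewrite -(ct_count s (fun k => k != 1%N)) E /= count_nseq /= mul0n.
have fixo : forall y, y \notin porbit s x -> s y = y.
  move=> y ny; apply: porbit_card1; apply/eqP/negPn/negP=> ne1.
  move/eqP/cards1P: Hc=> [Z EZ].
  have h1 : porbit s x \in [set X in porbits s | #|X| != 1%N].
    by rewrite inE imset_f // Hx.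
  have h2 : porbit s y \in [set X in porbits s | #|X| != 1%N].
    by rewrite inE imset_f // ne1.
  rewrite EZ !inE in h1 h2.
  move: ny; rewrite -eq_porbit_mem (eqP h1) (eqP h2) eqxx //.
have sxx : s x != x.
  by apply/eqP=> sx; move: Hx; rewrite porbit_fix // cards1.
have Ho : porbit s x = [set x; s x].
  have sxx2 : x != s x by rewrite eq_sym.
  apply/eqP; rewrite eq_sym eqEcard cards2 sxx2 Hx leqnn andbT.
  apply/subsetP=> y; rewrite !inE => /orP[]/eqP->; first exact: porbit_id.
  by apply: porbit_s; apply: porbit_id.
have ssx : s (s x) = x.
  have : s (s x) \in porbit s x by do 2 apply: porbit_s; apply: porbit_id.
  rewrite Ho !inE => /orP[/eqP//|/eqP h].
  by move/perm_inj: h => h; rewrite h eqxx in sxx.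
exists x; split=> //; apply/permP=> y.
case: (eqVneq y x)=> [->|nyx]; first by rewrite tpermL.
case: (eqVneq y (s x))=> [->|nysx]; first by rewrite tpermR.
rewrite tpermD 1?eq_sym //; apply: fixo.
by rewrite Ho !inE negb_or nyx nysx.
Qed.

Lemma ct_nm1 {n} (s : 'S_n) : cycle_type s = [:: n.-1; 1%N] ->
  exists x0, s x0 = x0 /\ exists y0, forall y, y != x0 -> y \in porbit s y0.
Proof.
move=> E; have [y0 Hy] : exists x, #|porbit s x| = n.-1 by apply: ct_mem; rewrite E mem_head.
have Hsum := ct_sum s; rewrite E /= addn0 in Hsum.
have HC : #|~: porbit s y0| = 1%N.
  by move: (cardsC (porbit s y0)); rewrite card_ord Hy; lia.
move/eqP/cards1P: HC=> [x0 Ex0].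
have nx0 : x0 \notin porbit s y0 by rewrite -in_setC Ex0 inE.
exists x0; split.
  have : s x0 \in ~: porbit s y0.
    rewrite inE; apply/negP=> h.
    have E1 := porbit_perm s 1 x0; rewrite expg1 in E1.
    rewrite -eq_porbit_mem E1 eq_porbit_mem in h.
    by rewrite h in nx0.
  by rewrite Ex0 inE => /eqP.
exists y0 => y ny; apply/negPn/negP=> h.
by rewrite -in_setC Ex0 inE in h; rewrite h in ny.
Qed.

Lemma porbitJ {T : finType} (s t : {perm T}) x :
  porbit (s ^ t)%g (t x) = t @: porbit s x.
Proof.
apply/setP=> y; apply/porbitP/imsetP=> [[i ->]|[z /porbitP[i ->] ->]].
  by exists ((s ^+ i)%g x); [exact: mem_porbit | rewrite -conjXg permJ].
by exists i; rewrite -conjXg permJ.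
Qed.

Lemma ct_conj {n} (s t : 'S_n) : cycle_type (s ^ t)%g = cycle_type s.
Proof.
rewrite /cycle_type; apply/perm_sortP.
- by move=> a b; rewrite /geq /= leq_total.
- by move=> a b c /= h1 h2; exact: leq_trans h2 h1.
- by move=> a b /andP[h1 h2]; apply/eqP; rewrite eqn_leq; apply/andP; split.
apply/seq.permP=> a.
rewrite !count_map !count_enum_set.
have -> : [set x in porbits (s ^ t)%g | preim (fun X : {set 'I_n} => #|X|) a x]
   = (fun X : {set 'I_n} => t @: X) @: [set x in porbits s | preim (fun X : {set 'I_n} => #|X|) a x].
  apply/setP=> Y; rewrite inE; apply/andP/imsetP.
    move=> [/imsetP[y _ ->] h].
    have Ey : porbit (s ^ t)%g y = t @: porbit s (t^-1 y)%g by rewrite -porbitJ permKV.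
    exists (porbit s (t^-1 y)%g); last exact: Ey.
    rewrite inE imset_f //=; move: h; rewrite /= Ey card_imset //; exact: perm_inj.
  move=> [X]; rewrite inE => /andP[/imsetP[x _ ->] h] ->; split.
    by rewrite -porbitJ imset_f.
  by rewrite /= card_imset //; exact: perm_inj.
rewrite card_imset //; apply: imset_inj; exact: perm_inj.
Qed.

Lemma porbit_trans {T : finType} (s : {perm T}) x y z :
  y \in porbit s x -> z \in porbit s x -> z \in porbit s y.
Proof. by rewrite -eq_porbit_mem => /eqP ->. Qed.

Lemma sym_gen m (H : {group 'S_m}) :
  (exists2 s, s \in H & exists x, forall y, y \in porbit s x) ->
  ((1 < m)%N -> exists2 s, s \in H & exists x, s x != x /\ s = tperm x (s x)) ->
  ((1 < m)%N -> exists2 s, s \in H & exists x0, s x0 = x0 /\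
        exists y0, forall y, y != x0 -> y \in porbit s y0) ->
  forall w : 'S_m, w \in H.
Proof.
move=> [s1 Hs1 [x1 Hx1]] Htr Hcyc w.
case: (leqP m 1) => hm.
  suff -> : w = 1%g by exact: group1.
  apply/permP=> i; rewrite perm1; apply/val_inj.
  have := ltn_ord i; have := ltn_ord (w i); rewrite /=; lia.
have [s0 Hs0 [a [sa Es0]]] := Htr hm.
have [s3 Hs3 [x0 [fx0 [y0 Hy0]]]] := Hcyc hm.
set b := s0 a in sa Es0.
have [b' nb' Hb'] : exists2 b', b' != x0 & tperm x0 b' \in H.
  have : x0 \in porbit s1 a by apply: porbit_trans.
  move=> /porbitP[i Ei]; exists ((s1 ^+ i)%g b).
    by rewrite Ei (inj_eq perm_inj).
  by rewrite Ei -tpermJ groupJ ?groupX // -Es0.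
have Hx0 : forall y, tperm x0 y \in H.
  move=> y; case: (eqVneq y x0) => [->|nyx]; first by rewrite tperm1 group1.
  have : y \in porbit s3 b' by apply: porbit_trans; apply: Hy0.
  move=> /porbitP[j ->].
  by rewrite -{1}(permX_fix j fx0) -tpermJ groupJ ?groupX.
have Hall : forall y z, tperm y z \in H.
  move=> y z; case: (eqVneq y x0) => [->|nyx]; first exact: Hx0.
  case: (eqVneq z x0) => [->|nzx]; first by rewrite tpermC.
  case: (eqVneq y z) => [->|nyz]; first by rewrite tperm1 group1.
  have -> : tperm y z = (tperm x0 y ^ tperm x0 z)%g.
    have E : tperm x0 z y = y by apply: tpermD; rewrite eq_sym.
    by rewrite tpermJ tpermL E [tperm z y]tpermC.
  by rewrite groupJ.
have [ts -> _] := prod_tpermP w.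
by apply: group_prod => t _; exact: Hall.
Qed.

Lemma tnth_inj {n} {rs : n.-tuple algC} : uniq rs -> injective (tnth rs).
Proof.
move=> U i j; rewrite !(tnth_nth 0) => /eqP; rewrite nth_uniq ?size_tuple //.
by move=> /eqP /val_inj.
Qed.

Lemma mk_idx {n} {rs : n.-tuple algC} {z} : z \in rs -> {i : 'I_n | tnth rs i = z}.
Proof.
move=> zin; have hi : (index z rs < n)%N by rewrite -{2}(size_tuple rs) index_mem.
by exists (Ordinal hi); rewrite (tnth_nth 0) /= nth_index.
Qed.

Lemma rn_mem {f : {poly int}} {n} {rs : n.-tuple algC} z :
  root_numbering f rs -> f != 0 -> root (polyC_of f) z = (z \in rs).
Proof.
move=> [U E] f0; rewrite E rootE hornerZ mulf_eq0 intr_eq0 lead_coef_eq0 (negbTE f0) /=.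
by rewrite -rootE root_prod_XsubC.
Qed.

Lemma map_polyC_of (u : {rmorphism algC -> algC}) f : map_poly u (polyC_of f) = polyC_of f.
Proof.
rewrite /polyC_of -map_poly_comp; apply: eq_map_poly => c /=; exact: rmorph_int.
Qed.

Lemma root_u (u : {rmorphism algC -> algC}) f z :
  root (polyC_of f) z -> root (polyC_of f) (u z).
Proof.
move=> /rootP h; apply/rootP.
by rewrite -{1}(map_polyC_of u) horner_map h rmorph0.
Qed.

Lemma galpermP n (rs : n.-tuple algC) (s : 'S_n) :
  reflect (exists u : {rmorphism algC -> algC}, forall i, u (tnth rs i) = tnth rs (s i))
          (s \in galperm rs).
Proof. by rewrite inE; apply: (iffP (asboolP _)). Qed.

Lemma gal_lift (f : {poly int}) n (rs : n.-tuple algC) (u : {rmorphism algC -> algC}) :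
  root_numbering f rs -> f != 0 ->
  exists2 s, s \in galperm rs & forall i, u (tnth rs i) = tnth rs (s i).
Proof.
move=> rn f0.
have hm : forall i, u (tnth rs i) \in rs.
  by move=> i; rewrite -(rn_mem _ rn f0); apply: root_u; rewrite (rn_mem _ rn f0) mem_tnth.
pose h i := sval (mk_idx (hm i)).
have hE : forall i, tnth rs (h i) = u (tnth rs i) by move=> i; rewrite /h; case: mk_idx.
have hinj : injective h.
  move=> i j e; apply: (tnth_inj rn.1); apply: (fmorph_inj u); by rewrite -!hE e.
exists (perm hinj); last by move=> i; rewrite permE hE.
by apply/galpermP; exists u => i; rewrite permE hE.
Qed.

Lemma galperm_group n (rs : n.-tuple algC) : group_set (galperm rs).
Proof.
apply/group_setP; split.
  by apply/galpermP; exists idfun => i; rewrite perm1.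
move=> s t /galpermP[u Hu] /galpermP[v Hv]; apply/galpermP.
by exists (v \o u) => i; rewrite permM /= Hu Hv.
Qed.

Lemma ct_transport {f : {poly int}} {n} {rs rs' : n.-tuple algC} {s'} :
  root_numbering f rs -> root_numbering f rs' -> f != 0 -> s' \in galperm rs' ->
  exists2 s, s \in galperm rs & cycle_type s = cycle_type s'.
Proof.
move=> rn rn' f0 /galpermP[u Hu].
have hm : forall i, tnth rs' i \in rs.
  by move=> i; rewrite -(rn_mem _ rn f0) (rn_mem _ rn' f0) mem_tnth.
pose h i := sval (mk_idx (hm i)).
have hE : forall i, tnth rs (h i) = tnth rs' i by move=> i; rewrite /h; case: mk_idx.
have hinj : injective h.
  by move=> i j e; apply: (tnth_inj rn'.1); rewrite -!hE e.
set sg := perm hinj.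
have sgE : forall i, tnth rs (sg i) = tnth rs' i by move=> i; rewrite permE hE.
exists (s' ^ sg)%g; last exact: ct_conj.
apply/galpermP; exists u => j.
by rewrite -(permKV sg j) permJ !sgE Hu.
Qed.

Lemma hct_transport (f : {poly int}) (rs : ((size f).-1).-tuple algC) sigma :
  root_numbering f rs -> f != 0 -> has_cycle_type f sigma ->
  exists2 s, s \in galperm rs & cycle_type s = sigma.
Proof.
move=> rn f0 [rs' [rn' [s' Hs' Ect]]].
have [s Hs E] := ct_transport rn rn' f0 Hs'.
by exists s; rewrite // E.
Qed.

Lemma hct_transport' (f : {poly int}) n (rs : n.-tuple algC) sigma :
  (size f).-1 = n -> root_numbering f rs -> f != 0 -> has_cycle_type f sigma ->
  exists2 s, s \in galperm rs & cycle_type s = sigma.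
Proof. by move=> En; subst n; exact: hct_transport. Qed.

Lemma rn_cast (f : {poly int}) n n' (rs : n.-tuple algC) :
  n = n' -> root_numbering f rs -> exists rs' : n'.-tuple algC, root_numbering f rs'.
Proof. by move=> E; subst n'; exists rs. Qed.

Lemma part_full n : (0 < n)%N -> is_partition n [:: n].
Proof. by move=> h; split => //=; rewrite ?h ?addn0. Qed.

Lemma part_transp n : (1 < n)%N -> is_partition n (2%N :: nseq (n - 2) 1%N).
Proof.
move=> h; split.
- rewrite /=; case: (n - 2)%N => //= k; rewrite /geq /=.
  by elim: k => //= k ->; rewrite andbT.
- by rewrite /= all_nseq orbT.
- rewrite /= sumn_nseq mul1n; lia.
Qed.

Lemma part_nm1 n : (1 < n)%N -> is_partition n [:: n.-1; 1%N].
Proof.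
move=> h; split.
- rewrite /= /geq /=; lia.
- rewrite /= andbT; lia.
- rewrite /=; lia.
Qed.

Theorem lemma6p5 (p k g : nat) (P Q : {poly int}) :
  prime p -> (0 < k)%N -> (1 <= g)%N ->
  (* P is a q-Weil polynomial of degree 2g, q = p^k (as P_A is) *)
  P \is monic -> size P = (g.*2).+1 ->
  (forall z : algC, z != 0 ->
     (polyC_of P).[(p ^ k)%:R / z] * z ^+ g.*2 = ((p ^ k)%:R) ^+ g * (polyC_of P).[z]) ->
  (forall z : algC, root (polyC_of P) z -> `|z| ^+ 2 = (p ^ k)%:R) ->
  (* Q is the polynomial with P(T) = T^g Q(T + q/T) *)
  (forall z : algC, z != 0 ->
     (polyC_of P).[z] = z ^+ g * (polyC_of Q).[z + (p ^ k)%:R / z]) ->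
  has_cycle_type P [:: g.*2] ->
  has_cycle_type P (2%N :: nseq (g.*2 - 2) 1%N) ->
  (forall sigma, is_partition g sigma -> has_cycle_type Q sigma) ->
  forall rs : ((size P).-1).-tuple algC, root_numbering P rs ->
    (galperm rs \isog W g)%g.
Proof.
move=> pr k0 g1 mon sP Hweil Habs HQ Hc2g Htr HQall.
have En : (size P).-1 = g.*2 by rewrite sP.
rewrite sP /= => rs rn.
set qC : algC := (p ^ k)%:R in Hweil Habs HQ.
have q0 : qC != 0 by rewrite /qC pnatr_eq0 -lt0n expn_gt0 prime_gt0.
have P0 : P != 0 by apply: monic_neq0.
have [rsQ0 [rnQ0 [sQ0 _ EQ0]]] := HQall _ (part_full _ g1).
have Em : (size Q).-1 = g by have := ct_sum sQ0; rewrite EQ0 /= addn0.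
have Q0 : Q != 0 by apply/eqP=> Q0; move: Em; rewrite Q0 size_poly0 /=; lia.
have [rsQ rnQ] := rn_cast _ _ _ _ Em rnQ0.
clear rsQ0 rnQ0 sQ0 EQ0.
set z := tnth rs.
have zroot : forall i, root (polyC_of P) (z i) by move=> i; rewrite (rn_mem _ rn P0) mem_tnth.
have z0 : forall i, z i != 0.
  move=> i; apply/eqP=> e; have := Habs _ (zroot i); rewrite e normr0 expr0n /= => /esym/eqP.
  by rewrite (negbTE q0).
have R2 : forall i, qC / z i \in rs.
  move=> i; rewrite -(rn_mem _ rn P0); apply/rootP.
  have := Hweil _ (z0 i); rewrite (rootP (zroot i)) mulr0 => /eqP.
  by rewrite mulf_eq0 expf_eq0 (negbTE (z0 i)) andbF orbF => /eqP.
have R3 : forall i, z i + qC / z i \in rsQ.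
  move=> i; rewrite -(rn_mem _ rnQ Q0); apply/rootP.
  have := HQ _ (z0 i); rewrite (rootP (zroot i)) => /esym/eqP.
  by rewrite mulf_eq0 expf_eq0 (negbTE (z0 i)) andbF /= => /eqP.
pose iota i := sval (mk_idx (R2 i)).
have hi : forall i, z (iota i) = qC / z i by move=> i; rewrite /iota; case: mk_idx.
pose pi i := sval (mk_idx (R3 i)).
have hp : forall i, tnth rsQ (pi i) = z i + qC / z i by move=> i; rewrite /pi; case: mk_idx.
have zinj : injective z := tnth_inj rn.1.
have zQinj : injective (tnth rsQ) := tnth_inj rnQ.1.
have ii : forall i, iota (iota i) = i.
  move=> i; apply: zinj; rewrite !hi; have := z0 i; have := q0; move=> a b; field.
  by rewrite a b.
have pii : forall i, pi (iota i) = pi i.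
  move=> i; apply: zQinj; rewrite !hp !hi; have := z0 i; have := q0; move=> a b; field.
  by rewrite a b.
have fib : forall i j, pi j = pi i -> j = i \/ j = iota i.
  move=> i j e; have : z j + qC / z j - (z i + qC / z i) = 0 by rewrite -!hp e subrr.
  move=> e2.
  have e3 : (z j - z i) * (z j * z i - qC) = 0.
    have e5 : (z j - z i) * (z j * z i - qC) = (z j + qC / z j - (z i + qC / z i)) * (z i * z j).
      have := z0 i; have := z0 j; move=> a b; field; by rewrite a b.
    by rewrite e5 e2 mul0r.
  move/eqP: e3; rewrite mulf_eq0 !subr_eq0 => /orP[/eqP/zinj -> | /eqP e4]; first by left.
  right; apply: zinj; rewrite hi -e4; have := z0 i; move=> a; field; by rewrite a.
have uq : forall (u : {rmorphism algC -> algC}) x, u (qC / x) = qC / u x.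
  by move=> u x; rewrite fmorph_div rmorph_nat.
have GW : forall (u : {rmorphism algC -> algC}) (s : 'S_(g.*2)),
    (forall i, u (z i) = z (s i)) -> forall i, tnth rsQ (pi (s i)) = u (tnth rsQ (pi i)).
  by move=> u s Hu i; rewrite !hp rmorphD uq Hu.
have Gi : forall s, s \in galperm rs -> forall i, s (iota i) = iota (s i).
  move=> s /galpermP[u Hu] i; apply: zinj.
  by rewrite -[z _]/(tnth rs _) -Hu -/z !hi uq -[z (s i)]/(tnth rs _) -Hu.
have fibS : forall i, [set j | pi j == pi i] \subset [set i; iota i].
  move=> i; apply/subsetP=> j; rewrite !inE => /eqP/fib[]->; by rewrite eqxx ?orbT.
have cnt : (\sum_(j : 'I_g) #|[set i | pi i == j]| = g.*2)%N.
  rewrite (eq_bigr (fun j => \sum_(i : 'I_(g.*2)) (pi i == j) : nat)%N); last first.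
    move=> j _; rewrite -sum1dep_card big_mkcond /=; apply: eq_bigr => i _.
    by case: (pi i == j).
  rewrite exchange_big /= (eq_bigr (fun _ => 1%N)); last first.
    move=> i _; rewrite (bigD1 (pi i)) //= eqxx big1 // => j /negbTE.
    by rewrite eq_sym => ->.
  by rewrite sum1_card card_ord.
have le2 : forall j, (#|[set i | pi i == j]| <= 2)%N.
  move=> j; case: (set_0Vmem [set i | pi i == j]) => [->|[i]]; first by rewrite cards0.
  rewrite inE => /eqP <-; apply: leq_trans (subset_leq_card (fibS i)) _.
  by rewrite cards2 ltnS leq_b1.
have eq2 : forall j, #|[set i | pi i == j]| = 2%N.
  move=> j; apply/eqP; rewrite eqn_leq le2 /=; rewrite leqNgt; apply/negP => lt2.
  move: cnt; rewrite (bigD1 j) //=.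
  have : (\sum_(i < g | i != j) #|[set i0 | pi i0 == i]| <= \sum_(i < g | i != j) 2)%N.
    by apply: leq_sum => i _; exact: le2.
  rewrite sum_nat_const cardC1 card_ord.
  move: (\sum_(i < g | i != j) _)%N => S; lia.
have ni : forall i, iota i != i.
  move=> i; apply/eqP=> e; have := eq2 (pi i).
  have := subset_leq_card (fibS i); rewrite e setUid cards1; lia.
have surj : forall j, exists i, pi i = j.
  move=> j; have := eq2 j; case: (set_0Vmem [set i | pi i == j]) => [->|[i]].
    by rewrite cards0.
  by rewrite inE => /eqP <- _; exists i.
pose GalG : {group 'S_(g.*2)} := Group (galperm_group _ rs).
have memG : forall s, (s \in GalG) = (s \in galperm rs) by [].
pose HG : {group 'S_g} := Group (galperm_group _ rsQ).
have Hall : forall w : 'S_g, w \in galperm rsQ.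
  apply: (@sym_gen g HG).
  - have [s Hs E] := hct_transport' _ _ _ _ Em rnQ Q0 (HQall _ (part_full _ g1)).
    by exists s => //; exact: ct_full _ E.
  - move=> hg; have [s Hs E] := hct_transport' _ _ _ _ Em rnQ Q0 (HQall _ (part_transp _ hg)).
    by exists s => //; exact: ct_transp _ E.
  - move=> hg; have [s Hs E] := hct_transport' _ _ _ _ Em rnQ Q0 (HQall _ (part_nm1 _ hg)).
    by exists s => //; exact: ct_nm1 _ E.
have lift : forall w : 'S_g, exists2 s, s \in galperm rs & forall i, pi (s i) = w (pi i).
  move=> w; have /galpermP[u Hu] := Hall w.
  have [s Hs Hsu] := gal_lift _ _ _ u rn P0.
  by exists s => // i; apply: zQinj; rewrite (GW u s Hsu) Hu.
have [a Ha] : exists a : 'I_g -> 'I_(g.*2), forall j, pi (a j) = j.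
  exact: (fin_all_exists surj).
have [t0 Ht0 Et0] := hct_transport' _ _ _ _ En rn P0 Htr.
have [x [sx Ex]] := ct_transp _ Et0.
have hb : t0 x = iota x.
  apply/eqP/negPn/negP=> nb.
  have e1 : t0 (iota x) = iota (t0 x) by apply: Gi.
  have e2 : t0 (iota x) = iota x.
    rewrite {1}Ex tpermD //; first by rewrite eq_sym ni.
  move: e1; rewrite e2 => /(congr1 iota); rewrite !ii => e3.
  by rewrite -e3 eqxx in sx.
have swaps : forall j, tperm (a j) (iota (a j)) \in galperm rs.
  move=> j; have [s Hs Hsp] := lift (tperm (pi x) j).
  have psx : pi (s x) = j by rewrite Hsp tpermL.
  have : (t0 ^ s)%g \in GalG by rewrite groupJ.
  rewrite memG Ex tpermJ hb (Gi s Hs).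
  have := fib (a j) (s x); rewrite Ha psx => /(_ erefl) [->//|->].
  by rewrite ii tpermC.
have Tj : forall j y, tperm (a j) (iota (a j)) y = if pi y == j then iota y else y.
  move=> j y; case: (eqVneq (pi y) j) => [e|ne].
    have := fib (a j) y; rewrite Ha e => /(_ erefl) [->|->].
      by rewrite tpermL.
    by rewrite tpermR ii.
  rewrite tpermD //; apply/eqP => e; move: ne; rewrite -e ?pii Ha eqxx //.
have Tprod : forall r : seq 'I_g, uniq r -> forall y,
    (\prod_(j <- r) tperm (a j) (iota (a j)))%g y = if pi y \in r then iota y else y.
  elim=> [|j r IH] /=; first by move=> _ y; rewrite big_nil perm1.
  move=> /andP[jr Ur] y; rewrite big_cons permM Tj inE.
  case: (eqVneq (pi y) j) => [e|ne] /=.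
    by rewrite IH // pii e (negbTE jr).
  by rewrite IH.
have pres : forall xx : 'S_(g.*2), (forall y, pi (xx y) = pi y) -> xx \in galperm rs.
  move=> xx Hx.
  have xy : forall y, xx y = y \/ xx y = iota y by move=> y; apply: fib; rewrite Hx.
  pose r := [seq j <- enum 'I_g | xx (a j) != a j].
  suff -> : xx = (\prod_(j <- r) tperm (a j) (iota (a j)))%g.
    rewrite -memG; apply: group_prod => j _; rewrite memG; exact: swaps.
  apply/permP => y; rewrite Tprod; last by rewrite /r filter_uniq ?enum_uniq.
  rewrite /r mem_filter mem_enum andbT.
  have [ey|ey] : y = a (pi y) \/ y = iota (a (pi y)) by apply: fib; rewrite Ha.
    move: ey; move: (pi y) => j ey; subst y.
    by case: (xy (a j)) => ->; rewrite ?eqxx // ni.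
  move: ey; move: (pi y) => j ey; subst y; rewrite ii.
  case: (xy (a j)) => e.
    rewrite e eqxx /=; case: (xy (iota (a j))) => // e2; rewrite ii in e2.
    have e3 : xx (iota (a j)) = xx (a j) by rewrite e2 e.
    by move/perm_inj: e3 => e3; move: (ni (a j)); rewrite e3 eqxx.
  rewrite e ni /=; case: (xy (iota (a j))) => e2; last by rewrite e2 ii.
  have e3 : xx (iota (a j)) = xx (a j) by rewrite e2 e.
  by move/perm_inj: e3 => e3; move: (ni (a j)); rewrite e3 eqxx.
have Gpres : forall s, s \in galperm rs -> forall y y', (pi (s y) == pi (s y')) = (pi y == pi y').
  move=> s Hs; have /galpermP[u Hu] := Hs; move=> y y'.
  by rewrite -(inj_eq zQinj) !(GW u s Hu) (inj_eq (fmorph_inj u)) (inj_eq zQinj).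
have hlt : forall kk : 'I_(g.*2), (kk./2 < g)%N by move=> kk; rewrite ltn_half_double.
pose h (kk : 'I_(g.*2)) : 'I_g := Ordinal (hlt kk).
pose tau0 (kk : 'I_(g.*2)) := if odd kk then iota (a (h kk)) else a (h kk).
have ptau : forall kk, pi (tau0 kk) = h kk.
  by move=> kk; rewrite /tau0; case: ifP => _; rewrite ?pii Ha.
have tauinj : injective tau0.
  move=> kk ll e; have hkl : h kk = h ll by rewrite -!ptau e.
  have ekl : (kk./2 = ll./2)%N by move/(congr1 val): hkl.
  have okl : odd kk = odd ll.
    move: e; rewrite /tau0 hkl; case: (odd kk); case: (odd ll) => // e.
      by move: (ni (a (h ll))); rewrite e eqxx.
    by move: (ni (a (h ll))); rewrite -e eqxx.
  by apply/val_inj; rewrite -[val kk]odd_double_half -[val ll]odd_double_half ekl okl.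
pose tau := perm tauinj.
have key : forall i j : 'I_(g.*2), ((val i)./2 == (val j)./2) = (pi (tau i) == pi (tau j)).
  by move=> i j; rewrite !permE !ptau.
have Wset : (galperm rs :^ tau^-1)%g = W g.
  apply/setP => w; rewrite mem_conjg invgK [in RHS]inE.
  set s := (w ^ tau)%g.
  have sE : forall kk, s (tau kk) = tau (w kk) by move=> kk; rewrite /s permJ.
  apply/idP/idP.
    move=> Hs; apply/forallP => i; apply/forallP => j.
    by rewrite !key -!sE Gpres.
  move=> /forallP HW.
  have spres : forall y y', (pi (s y) == pi (s y')) = (pi y == pi y').
    move=> y y'; rewrite -(permKV tau y) -(permKV tau y') !sE -!key.
    by have := forallP (HW (tau^-1 y)%g) (tau^-1 y')%g => /eqP ->.
  have wbinj : injective (fun j => pi (s (a j))).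
    by move=> j j' /eqP; rewrite spres !Ha => /eqP.
  pose wb := perm wbinj.
  have [s2 Hs2 Hs2p] := lift wb.
  have hs : forall y, pi (s y) = wb (pi y).
    by move=> y; rewrite [wb _]permE /=; apply/eqP; rewrite spres Ha.
  have Hxx : (s * s2^-1)%g \in galperm rs.
    apply: pres => y; rewrite permM.
    by apply: (@perm_inj _ wb); rewrite -Hs2p permKV hs.
  have -> : s = ((s * s2^-1) * s2)%g by rewrite mulgKV.
  by rewrite -memG groupM.
rewrite -Wset; exact: (@conj_isog _ GalG (tau^-1)%g).
Qed.
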